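(* There is an absolute constant $c$ such that for every instance of $P_n\,|\,\mathrm{conc}, p_j\le p\,|\,*$ with conflict graph $G$ on $n\ge 2$ jobs, there exists a feasible minimal schedule $C$ with $C_{\max}=\max_j C_j\le c\cdot tw(G)\cdot p\log n$ (i.e. $C_{\max}=O(tw(G)\cdot p\log n)$).
   Context: In $P_n\,|\,\mathrm{conc}, p_j\le p\,|\,*$, jobs $\{1,\dots,n\}$ have integer processing times $1\le p_j\le p$ and release time $0$; there is a conflict graph $G=(\{1,\dots,n\},E)$. A schedule $C:\{1,\dots,n\}\to\mathbb{N}$ is feasible if $C_j-p_j\ge 0$ for all $j$ and $[C_i-p_i,C_i)\cap[C_j-p_j,C_j)=\emptyset$ for all $\{i,j\}\in E$. A feasible schedule is minimal if decreasing the completion time of any job by any positive amount makes it infeasible. $tw(G)$ is the treewidth of $G$. *)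

(* Defs.v *)
From Stdlib Require Import ClassicalEpsilon.
From mathcomp Require Import all_boot.
Set Implicit Arguments. Unset Strict Implicit. Unset Printing Implicit Defensive.

(* A tree on the node set 'I_m.+1: a symmetric irreflexive, connected relation
   with exactly m (unordered) edges, i.e. 2*m ordered adjacent pairs. *)
Definition is_tree (m : nat) (t : rel 'I_m.+1) : Prop :=
  [/\ symmetric t, irreflexive t,
      (forall a b, connect t a b) &
      #|[set ab : 'I_m.+1 * 'I_m.+1 | t ab.1 ab.2]| = 2 * m].

(* (t, B) is a tree decomposition of the graph (V, E) whose bags have size at
   most k+1 (i.e. width at most k). *)
Definition tree_decomp_width (V : finType) (E : rel V) (k : nat)
    (m : nat) (t : rel 'I_m.+1) (B : 'I_m.+1 -> {set V}) : Prop :=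
  [/\ is_tree t,
      (forall v : V, exists a, v \in B a),
      (forall u v : V, E u v -> exists a, (u \in B a) && (v \in B a)),
      (forall (v : V) (a b : 'I_m.+1), v \in B a -> v \in B b ->
          connect [rel x y | [&& t x y, v \in B x & v \in B y]] a b) &
      (forall a, #|B a| <= k.+1)].

Definition tw_le (V : finType) (E : rel V) (k : nat) : Prop :=
  exists m (t : rel 'I_m.+1) (B : 'I_m.+1 -> {set V}), tree_decomp_width E k t B.

Definition tw_leb (V : finType) (E : rel V) (k : nat) : bool :=
  if excluded_middle_informative (tw_le E k) then true else false.

Lemma tw_leb_exists (V : finType) (E : rel V) : exists k, tw_leb E k.
Proof.
exists #|V|; rewrite /tw_leb; case: excluded_middle_informative => // H.
exfalso; apply: H; exists 0, (fun _ _ => false), (fun _ => setT).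
split.
- split => //.
  + by move=> a b; rewrite !ord1 connect0.
  + by apply/eqP; rewrite cards_eq0; apply/eqP/setP => x; rewrite !inE.
- by move=> v; exists ord0; rewrite inE.
- by move=> u v _; exists ord0; rewrite !inE.
- by move=> v a b _ _; rewrite !ord1 connect0.
- by move=> a; rewrite cardsT.
Qed.

Definition treewidth (V : finType) (E : rel V) : nat := ex_minn (tw_leb_exists E).

Definition feasible (n : nat) (E : rel 'I_n) (pt : 'I_n -> nat) (C : 'I_n -> nat) : Prop :=
  (forall j, pt j <= C j) /\
  (forall i j, E i j -> forall t : nat,
      ~~ ((C i - pt i <= t < C i) && (C j - pt j <= t < C j))).

Definition decrease (n : nat) (C : 'I_n -> nat) (j : 'I_n) (d : nat) : 'I_n -> nat :=
  fun i => if i == j then C j - d else C i.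

Definition minimal_schedule (n : nat) (E : rel 'I_n) (pt : 'I_n -> nat) (C : 'I_n -> nat) : Prop :=
  feasible E pt C /\
  (forall j d, 0 < d <= C j -> ~ feasible E pt (decrease C j d)).

Definition Cmax (n : nat) (C : 'I_n -> nat) : nat := \max_(j < n) C j.

(* Main.v *)
Require Import Defs.
From mathcomp Require Import all_boot.
From Stdlib Require Import Classical ClassicalEpsilon.
From mathcomp Require Import zify.
Set Implicit Arguments. Unset Strict Implicit. Unset Printing Implicit Defensive.

Lemma shortcut (N : finType) (r : rel N) (a b : N) :
  (forall z, r a z -> z = b) -> (forall x, r x a -> x = b) ->
  forall x y, x != a -> y != a -> connect r x y ->
  connect [rel u w | [&& r u w, u != a & w != a]] x y.
Proof.
move=> Ha Hb x y xa ya /connectP [p Hp Hy]; subst y.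
have Hs := leqnn (size p); move: Hs; move: {-1}(size p) => n.
elim: n x p xa Hp ya => [|n IH] x p xa Hp ya Hs.
  by case: p Hs Hp ya => //= *; exact: connect0.
case: p Hs Hp ya => [|z p] /=; first by move=> *; exact: connect0.
move=> Hs /andP [Hxz Hp] ya.
case: (eqVneq z a) => [za|za].
  subst z; case: p Hs Hp ya => [|w p] /=; first by rewrite eqxx.
  move=> Hs /andP [Haw Hp] ya.
  have wb := Ha _ Haw; have xb := Hb _ Hxz; subst w x.
  by apply: IH => //; apply: ltnW.
apply: connect_trans (connect1 _) (IH z p za Hp ya Hs) => /=.
by rewrite Hxz xa za.
Qed.

Definition rA (N : finType) (A : {set N}) (r : rel N) : rel N :=
  [rel x y | [&& r x y, x \in A & y \in A]].
Definition nbA (N : finType) (t : rel N) (A : {set N}) (x : N) : {set N} :=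
  [set y in A | t x y].
Definition pairsA (N : finType) (t : rel N) (A : {set N}) : {set N * N} :=
  [set xy : N * N | [&& xy.1 \in A, xy.2 \in A & t xy.1 xy.2]].
Definition treeset (N : finType) (t : rel N) (A : {set N}) : Prop :=
  (forall x y, x \in A -> y \in A -> connect (rA A t) x y) /\
  #|pairsA t A| = 2 * (#|A|.-1).

Lemma pairs_sum (N : finType) (t : rel N) (A : {set N}) :
  #|pairsA t A| = \sum_(x in A) #|nbA t A x|.
Proof.
have -> : \sum_(x in A) #|nbA t A x| = \sum_(x in A) \sum_(y in nbA t A x) 1.
  by apply: eq_bigr => x _; rewrite sum1_card.
rewrite pair_big_dep -sum1_card /=; apply: eq_bigl => -[x y] /=.
by rewrite !inE /= andbA.
Qed.

Lemma leaf_exists (N : finType) (t : rel N) (A : {set N}) :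
  irreflexive t -> treeset t A -> 1 < #|A| ->
  exists a b, [/\ a \in A, b \in A, t a b & nbA t A a = [set b]].
Proof.
move=> irr [Hc Hn] H2.
have deg1 : forall x, x \in A -> 0 < #|nbA t A x|.
  move=> x xA.
  have /card_gt0P [y] : 0 < #|A :\ x| by rewrite (cardsD1 x A) xA in H2.
  rewrite !inE => /andP [yx yA].
  case/connectP: (Hc x y xA yA) => [[|z p]] /=; first by move=> _ E; rewrite E eqxx in yx.
  case/andP => /andP [txz /andP [_ zA]] _ _.
  by apply/card_gt0P; exists z; rewrite inE zA txz.
have [/existsP [a /andP [aA /cards1P [b Hb]]]|Hno] := boolP [exists x in A, #|nbA t A x| == 1].
  have : b \in nbA t A a by rewrite Hb set11.
  rewrite inE => /andP [bA tab].
  by exists a, b.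
exfalso.
have : \sum_(x in A) 2 <= \sum_(x in A) #|nbA t A x|.
  apply: leq_sum => x xA; have := deg1 x xA.
  case: (ltngtP #|nbA t A x| 1) => // H _.
  by exfalso; move/negP: Hno; apply; apply/existsP; exists x; rewrite xA H eqxx.
rewrite -pairs_sum Hn sum_nat_const.
case: #|A| H2 => [|[|m]] //= _; rewrite mulnC; lia.
Qed.

Definition rv (V N : finType) (t : rel N) (B : N -> {set V}) (v : V) : rel N :=
  [rel x y | [&& t x y, v \in B x & v \in B y]].

Lemma restrict_leaf (N : finType) (t r0 : rel N) (A : {set N}) (a b : N) :
  symmetric t -> (forall z, z \in A -> t a z -> z = b) ->
  (forall x y, r0 x y -> t x y) -> forall x y,
  x \in A :\ a -> y \in A :\ a -> connect (rA A r0) x y -> connect (rA (A :\ a) r0) x y.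
Proof.
move=> sym anb r0t x y; rewrite !inE => /andP [xa xA] /andP [ya yA] H.
have Heq : [rel u w | [&& rA A r0 u w, u != a & w != a]] =2 rA (A :\ a) r0.
  move=> u w; rewrite /rA /= !inE.
  by case: (r0 u w); case: (u \in A); case: (w \in A); case: (u != a); case: (w != a).
rewrite -(eq_connect Heq); apply: (shortcut (b := b)) => //.
- by move=> z /= /and3P [/r0t taz _ zA]; apply: anb.
- by move=> z /= /and3P [/r0t tza zA _]; apply: anb; rewrite // sym.
Qed.

Lemma main (V N : finType) (E : rel V) (t : rel N) (B : N -> {set V}) (S : {set V}) :
  symmetric t -> irreflexive t ->
  forall n (A : {set N}), #|A| = n.+1 -> treeset t A ->
  (forall v, v \in S -> exists2 a, a \in A & v \in B a) ->
  (forall u v, u \in S -> v \in S -> E u v -> exists2 a, a \in A & (u \in B a) && (v \in B a)) ->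
  (forall v a c, v \in S -> a \in A -> c \in A -> v \in B a -> v \in B c ->
     connect (rA A (rv t B v)) a c) ->
  forall v0, v0 \in S ->
  exists v, v \in S /\ exists a, v \in B a /\ forall u, u \in S -> E v u -> u \in B a.
Proof.
move=> sym irr; elim=> [|n IH] A HA Htr Hbag Hedge Hcon v0 v0S.
  have [x Ax] := cards1P (introT eqP HA).
  exists v0; split => //; have [a aA va] := Hbag v0 v0S; exists a; split => // u uS Evu.
  have [c cA /andP [_ uc]] := Hedge v0 u v0S uS Evu.
  move: aA cA; rewrite Ax !inE => /eqP -> /eqP Hc; by rewrite -Hc.
have H2 : 1 < #|A| by rewrite HA.
have [a [b [aA bA tab Hnb]]] := leaf_exists irr Htr H2.
have anb : forall z, z \in A -> t a z -> z = b.
  by move=> z zA taz; apply/set1P; rewrite -Hnb inE zA taz.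
have ab : a != b by apply/eqP => E0; move: tab; rewrite E0 irr.
case: (boolP [exists v in S, (v \in B a) && (v \notin B b)]).
  case/existsP => v /and3P [vS va vb]; exists v; split => //; exists a; split => // u uS Evu.
  have [c cA /andP [vc uc]] := Hedge v u vS uS Evu.
  case: (eqVneq c a) => [<- //|ca].
  case/connectP: (Hcon v a c vS aA cA va vc) => [[|z p]] /=.
    by move=> _ E0; rewrite E0 eqxx in ca.
  case/andP => /and3P [/and3P [taz _ vz] _ zA] _ _.
  by rewrite (anb z zA taz) (negbTE vb) in vz.
move=> Hno.
have ab_b : forall v, v \in S -> v \in B a -> v \in B b.
  move=> v vS va; apply/negPn/negP => vb; move/negP: Hno; apply.
  by apply/existsP; exists v; rewrite vS va vb.
have bA' : b \in A :\ a by rewrite !inE eq_sym ab bA.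
have subA : forall x, x \in A :\ a -> x \in A by move=> x; rewrite !inE => /andP [].
apply: (IH (A :\ a)) v0S.
- by move: HA; rewrite (cardsD1 a A) aA add1n => -[].
- split.
  + move=> x y xA' yA'; apply: (restrict_leaf sym anb) => //.
    by case: Htr => Hc _; apply: Hc; apply: subA.
  + have Hpa : pairsA t A = (a, b) |: ((b, a) |: pairsA t (A :\ a)).
      apply/setP => -[x y]; rewrite !inE /=; apply/idP/idP.
      * case/and3P => xA yA txy.
        case: (eqVneq x a) => [xa|xa].
          by subst x; rewrite (anb y yA txy) eqxx.
        case: (eqVneq y a) => [ya|ya].
          by subst y; rewrite (anb x xA) ?eqxx ?orbT // sym.
        by rewrite xA yA txy !orbT.
      * case/or3P => [/eqP [-> ->]|/eqP [-> ->]|/and3P [/andP [_ xA] /andP [_ yA] txy]].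
        - by rewrite aA bA tab.
        - by rewrite aA bA sym tab.
        - by rewrite xA yA txy.
    have HA' : #|A :\ a| = n.+1 by move: HA; rewrite (cardsD1 a A) aA add1n => -[].
    case: Htr => _; rewrite Hpa HA HA' !cardsU1 !inE /= eqxx !andbF /= xpair_eqE (negbTE ab) /=.
    lia.
- move=> v vS; have [c cA vc] := Hbag v vS.
  case: (eqVneq c a) => [ca|ca]; first by exists b => //; apply: ab_b; rewrite // -ca.
  by exists c => //; rewrite !inE ca cA.
- move=> u v uS vS Euv; have [c cA /andP [uc vc]] := Hedge u v uS vS Euv.
  case: (eqVneq c a) => [ca|ca].
    by exists b => //; subst c; rewrite !ab_b.
  by exists c; rewrite ?uc ?vc // !inE ca cA.
- move=> v x y vS xA' yA' vx vy; apply: (restrict_leaf sym anb) => //.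
    by move=> ? ? /and3P [].
  by apply: Hcon => //; apply: subA.
Qed.

Lemma tw_degen (V : finType) (E : rel V) k : irreflexive E -> tw_le E k ->
  forall (S : {set V}) v0, v0 \in S -> exists2 v, v \in S & #|[set u in S | E v u]| <= k.
Proof.
move=> irrE [m [t [B [[sym irr conn cnt] Hcov Hed Hcn Hsz]]]] S v0 v0S.
have eqT : forall r : rel 'I_m.+1, rA setT r =2 r.
  by move=> r x y; rewrite /rA /= !inE !andbT.
have H1 : #|[set: 'I_m.+1]| = m.+1 by rewrite cardsT card_ord.
have H2 : treeset t setT.
  split; first by move=> x y _ _; rewrite (eq_connect (eqT t)).
  rewrite cardsT card_ord -cnt; apply: eq_card => -[x y]; by rewrite !inE.
have H3 : forall v, v \in S -> exists2 a, a \in setT & v \in B a.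
  by move=> v _; have [a va] := Hcov v; exists a; rewrite ?inE.
have H4 : forall u v, u \in S -> v \in S -> E u v -> exists2 a, a \in setT & (u \in B a) && (v \in B a).
  by move=> u v _ _ Euv; have [a Ha] := Hed u v Euv; exists a; rewrite ?inE.
have H5 : forall v a c, v \in S -> a \in setT -> c \in setT -> v \in B a -> v \in B c ->
     connect (rA setT (rv t B v)) a c.
  by move=> v a c _ _ _ va vc; rewrite (eq_connect (eqT _)); apply: Hcn.
have [v [vS [a [va Hu]]]] := main sym irr H1 H2 H3 H4 H5 v0S.
exists v => //.
have : [set u in S | E v u] \subset B a :\ v.
  apply/subsetP => u; rewrite !inE => /andP [uS Evu].
  rewrite Hu // andbT; apply/eqP => E0; by move: Evu; rewrite E0 irrE.
move/subset_leq_card => H; apply: leq_trans H _.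
have := Hsz a; rewrite (cardsD1 v (B a)) va add1n ltnS; done.
Qed.

Lemma coloring (V : finType) (E : rel V) k : symmetric E -> irreflexive E -> tw_le E k ->
  forall (S : {set V}), exists col : V -> 'I_k.+1,
    forall u v, u \in S -> v \in S -> E u v -> col u != col v.
Proof.
move=> sym irr Htw S.
move: (leqnn #|S|); move: {-1}#|S| => n; elim: n S => [|n IH] S HS.
  exists (fun _ => ord0) => u v uS; move: HS; rewrite leqn0 cards_eq0 => /eqP S0.
  by move: uS; rewrite S0 inE.
case: (set_0Vmem S) => [S0|[v0 v0S]].
  by exists (fun _ => ord0) => u v; rewrite S0 inE.
have [v vS Hdeg] := tw_degen irr Htw v0S.
have HS' : #|S :\ v| <= n by move: HS; rewrite (cardsD1 v S) vS add1n ltnS.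
have [col' Hc'] := IH (S :\ v) HS'.
set Nb := [set u in S | E v u].
have : #|col' @: Nb| < #|'I_k.+1|.
  by rewrite card_ord ltnS; apply: leq_trans (leq_imset_card _ _) Hdeg.
rewrite -(cardsC (col' @: Nb)) -{1}(addn0 #|_|) ltn_add2l => /card_gt0P [c].
rewrite inE => cX.
exists (fun u => if u == v then c else col' u) => u w uS wS Euw.
case: (eqVneq u v) => [uv|uv]; case: (eqVneq w v) => [wv|wv].
- by move: Euw; rewrite uv wv irr.
- subst u; apply: contra cX => /eqP ->; apply: imset_f; by rewrite inE wS Euw.
- subst w; rewrite eq_sym; apply: contra cX => /eqP ->; apply: imset_f; by rewrite inE uS sym Euw.
- by apply: Hc' => //; rewrite !inE ?uv ?wv.
Qed.

Lemma minimize n (E : rel 'I_n) pt Bd : forall s C, \sum_j C j < s -> feasible E pt C ->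
  Cmax C <= Bd -> exists C', minimal_schedule E pt C' /\ Cmax C' <= Bd.
Proof.
elim=> [|s IH] C // Hs HF HB.
case: (classic (forall j d, 0 < d <= C j -> ~ feasible E pt (decrease C j d))) => Hm.
  by exists C.
have [j /not_all_ex_not [d Hd]] := not_all_ex_not _ _ Hm.
have [Hd1 HF'] := imply_to_and _ _ Hd.
have {HF'} HF' := NNPP _ HF'.
apply: (IH (decrease C j d)) => //.
- have E1 : \sum_i decrease C j d i + d = \sum_i C i.
    rewrite (bigD1 j) //= [in RHS](bigD1 j) //= /decrease eqxx.
    have -> : \sum_(i | i != j) (if i == j then C j - d else C i) = \sum_(i | i != j) C i.
      by apply: eq_bigr => i /negbTE ->.
    by case/andP: Hd1 => _ Hd2; rewrite addnAC subnK.
  case/andP: Hd1 => Hd0 _; rewrite -E1 in Hs; lia.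
- apply/bigmax_leqP => i _.
  apply: (leq_trans _ (leq_trans (@leq_bigmax _ C i) HB)).
  by rewrite /decrease; case: eqP => [->|//]; exact: leq_subr.
Qed.

Theorem lemma6 :
  exists c : nat,
  forall (n : nat) (E : rel 'I_n) (pt : 'I_n -> nat) (p : nat),
    2 <= n ->
    symmetric E -> irreflexive E ->
    (forall j, 1 <= pt j <= p) ->
    exists C : 'I_n -> nat,
      minimal_schedule E pt C /\
      Cmax C <= c * (treewidth E).+1 * p * trunc_log 2 n.
Proof.
exists 1 => n E pt p Hn sym irr Hpt.
set k := treewidth E.
have Htw : tw_le E k.
  rewrite /k /treewidth; case: ex_minnP => m; rewrite /tw_leb.
  by case: excluded_middle_informative.
have [col Hcol] := coloring sym irr Htw [set: 'I_n].
pose C := fun j => col j * p + pt j.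
have HF : feasible E pt C.
  split; first by move=> j; exact: leq_addl.
  move=> i j Eij t0; rewrite /C !addnK.
  have hab := Hcol i j (in_setT _) (in_setT _) Eij.
  have /andP [_ hi] := Hpt i; have /andP [_ hj] := Hpt j.
  have hab' : (col i : nat) != col j by [].
  move: (nat_of_ord (col i)) (nat_of_ord (col j)) hab' => a b hab'.
  case: (ltngtP a b) hab' => // h _.
    have h2 : a.+1 * p <= b * p by apply: leq_mul.
    rewrite mulSn in h2; apply/negP => /andP [/andP [h3 h4] /andP [h5 h6]]; lia.
  have h2 : b.+1 * p <= a * p by apply: leq_mul.
  rewrite mulSn in h2; apply/negP => /andP [/andP [h3 h4] /andP [h5 h6]]; lia.
have HB : Cmax C <= 1 * k.+1 * p * trunc_log 2 n.
  have Hl : 0 < trunc_log 2 n by rewrite trunc_log_gt0 Hn.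
  apply: (@leq_trans (k.+1 * p)).
    apply/bigmax_leqP => j _; rewrite /C mulSn addnC.
    apply: leq_add; first by case/andP: (Hpt j).
    by apply: leq_mul => //; rewrite -ltnS.
  by rewrite mul1n; apply: leq_pmulr.
exact: (minimize (s := (\sum_j C j).+1)).
Qed.
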